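(* Let $g\geq 2$, $h$ and $t\ge 1$ be integers with $h>g^t(g-1)$. Then there exists a partition $\mathbb{N}=W_0\cup\cdots\cup W_{h-1}$ (into pairwise disjoint sets) such that each set $W_r$ ($0\le r\le h-1$) contains infinitely many intervals of at least $t$ consecutive integers, and every integer $n\geq h$ belongs to $hA_g(W_0)$, i.e. every integer $n\ge h$ can be written as $n=a_1+\cdots+a_h$ with $a_1,\dots,a_h\in A_g(W_0)$.
   Context: $\mathbb{N}$ denotes the set of all nonnegative integers. For a nonempty $W\subseteq\mathbb{N}$ and an integer $g\ge 2$, $A_g(W)$ is the set of all numbers of the form $\sum_{f\in F}a_f g^f$, where $F$ is a finite nonempty subset of $W$ and $1\le a_f\le g-1$ for each $f\in F$. For a set $B\subseteq \mathbb{N}$, $hB$ denotes the set of all sums $b_1+\cdots+b_h$ with $b_1,\dots,b_h\in B$ (repetitions allowed). *)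

(* Defs.v *)
From mathcomp Require Import all_boot.
Set Implicit Arguments. Unset Strict Implicit. Unset Printing Implicit Defensive.

Definition A_g (g : nat) (W : nat -> Prop) (n : nat) : Prop :=
  exists (F : seq nat) (a : nat -> nat),
    [/\ F != [::], uniq F, (forall f, f \in F -> W f),
        (forall f, f \in F -> 0 < a f <= g - 1)
      & n = \sum_(f <- F) a f * g ^ f].

Definition hfold_sum (h : nat) (B : nat -> Prop) (n : nat) : Prop :=
  exists s : seq nat, [/\ size s = h, (forall b, b \in s -> B b) & n = sumn s].

Definition inf_many_blocks (t : nat) (S : nat -> Prop) : Prop :=
  forall N, exists m, N <= m /\ forall i, i < t -> S (m + i).

(* Main.v *)
Require Import Defs.
From mathcomp Require Import all_boot zify.
Set Implicit Arguments. Unset Strict Implicit. Unset Printing Implicit Defensive.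

Lemma digits_sum g t a : 0 < g -> a < g ^ t ->
  a = \sum_(0 <= j < t) (a %/ g ^ j %% g) * g ^ j.
Proof.
move=> g0; elim: t a => [|t IH] a ha.
  by rewrite big_geq //; move: ha; rewrite expn0; lia.
rewrite big_nat_recl // expn0 divn1 muln1.
have ha' : a %/ g < g ^ t by rewrite ltn_divLR // -expnSr.
rewrite (eq_big_nat _ _ (F2 := fun j => g * ((a %/ g) %/ g ^ j %% g * g ^ j))); last first.
  by move=> j _; rewrite expnS divnMA mulnCA.
by rewrite -big_distrr /= -IH // {1}(divn_eq a g); lia.
Qed.

Lemma geom_sum g t : 0 < g -> \sum_(0 <= j < t) (g - 1) * g ^ j = g ^ t - 1.
Proof.
move=> g0; elim: t => [|t IH]; first by rewrite big_geq.
rewrite big_nat_recr //= IH expnS.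
have : g ^ t <= g * g ^ t by rewrite leq_pmull.
have : 0 < g ^ t by rewrite expn_gt0 g0.
rewrite mulnBl mul1n; lia.
Qed.

Lemma block_rep g t v : 1 < g -> v < g ^ t * g ^ t ->
  exists d : nat -> nat, v = \sum_(0 <= j < t) d j * g ^ j /\
    (forall j, d j <= (g ^ t + 1) * (g - 1)) /\ (forall j, t <= j -> d j = 0).
Proof.
move=> g1 hv.
have g0 : 0 < g by lia.
have X0 : 0 < g ^ t by rewrite expn_gt0 g0.
set a := v %% g ^ t; set b := v %/ g ^ t.
have hb : b < g ^ t by rewrite /b ltn_divLR.
have ha : a < g ^ t by rewrite /a ltn_pmod.
exists (fun j => if j < t then a %/ g ^ j %% g + b %/ g ^ j %% g + b * (g - 1) else 0).
split; last split.
- rewrite (eq_big_nat _ _ (F2 := fun j => a %/ g ^ j %% g * g ^ j + b %/ g ^ j %% g * g ^ j + b * ((g - 1) * g ^ j))); last first.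
    by move=> j /andP[_ ->]; rewrite !mulnDl mulnA.
  rewrite !big_split /= -big_distrr /= geom_sum // -!digits_sum //.
  rewrite {1}(divn_eq v (g ^ t)) -/a -/b.
  have : b <= b * g ^ t by rewrite leq_pmulr.
  rewrite mulnBr muln1; lia.
- move=> j; case: ifP => // _.
  have h1 : a %/ g ^ j %% g < g by rewrite ltn_pmod.
  have h2 : b %/ g ^ j %% g < g by rewrite ltn_pmod.
  have h3 : b * (g - 1) <= (g ^ t - 1) * (g - 1) by rewrite leq_mul2r; lia.
  have e : (g ^ t + 1) * (g - 1) = (g ^ t - 1) * (g - 1) + (g - 1) + (g - 1).
    have : g - 1 <= g ^ t * (g - 1) by rewrite leq_pmull.
    rewrite mulnDl mulnBl !mul1n; lia.
  rewrite e; lia.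
- by move=> j hj; case: ifP => //; lia.
Qed.

Lemma sum_lt p n : p <= n -> \sum_(0 <= i < n) (i < p : nat) = p.
Proof.
move=> hp; rewrite (big_cat_nat _ (n := p)) //=.
rewrite (eq_big_nat _ _ (F2 := fun _ => 1)); last by move=> i /andP[_ ->].
rewrite [X in _ + X](eq_big_nat _ _ (F2 := fun _ => 0)); last by move=> i /andP[hi _]; rewrite ltnNge hi.
by rewrite !sum_nat_const_nat; lia.
Qed.

Lemma sum_ge p n : p <= n -> \sum_(0 <= i < n) (p <= i : nat) = n - p.
Proof.
move=> hp; rewrite (big_cat_nat _ (n := p)) //=.
rewrite (eq_big_nat _ _ (F2 := fun _ => 0)); last by move=> i /andP[_ hi]; rewrite leqNgt hi.
rewrite [X in _ + X](eq_big_nat _ _ (F2 := fun _ => 1)); last by move=> i /andP[-> _].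
by rewrite !sum_nat_const_nat; lia.
Qed.

Lemma periodic_rep g t m : 1 < g -> 0 < t ->
  exists (c : nat -> nat) (B : nat), m = \sum_(0 <= f < B) c f * g ^ f /\
    (forall f, 0 < c f -> f %% (t + t) < t) /\
    (forall f, c f <= (g ^ t + 1) * (g - 1)).
Proof.
move=> g1 t0.
have g0 : 0 < g by lia.
have D1 : 1 < g ^ t * g ^ t.
  have : 1 < g ^ t by rewrite -{1}(expn0 g) ltn_exp2l.
  have : 0 < g ^ t by rewrite expn_gt0 g0.
  nia.
elim: m.+1 {-2}m (ltnSn m) => // k IH n hm.
case: (posnP n) => [->|m0].
  by exists (fun _ => 0), 0; split; [rewrite big_geq | split].
have hm' : n %/ (g ^ t * g ^ t) < k.
  by apply: leq_trans (ltn_Pdiv D1 m0) _.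
have [c' [B' [e' [a' b']]]] := IH _ hm'.
have hv : n %% (g ^ t * g ^ t) < g ^ t * g ^ t by rewrite ltn_pmod //; lia.
have [d [ed [bd zd]]] := block_rep g1 hv.
exists (fun f => if f < t + t then d f else c' (f - (t + t))), (t + t + B').
split; last split.
- rewrite (big_cat_nat _ (n := t + t)) //=; last by lia.
  rewrite (eq_big_nat _ _ (F2 := fun f => d f * g ^ f)); last by move=> i /andP[_ ->].
  rewrite (big_cat_nat _ (n := t)) //=; last by lia.
  rewrite [X in _ + X + _](eq_big_nat _ _ (F2 := fun f => 0)); last first.
    by move=> i /andP[hi _]; rewrite zd.
  rewrite sum_nat_const_nat muln0 addn0 -ed.
  rewrite -{1}(add0n (t + t)) big_addn.
  rewrite (eq_big_nat _ _ (F2 := fun f => (c' f * g ^ f) * (g ^ t * g ^ t))); last first.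
    by move=> i _; rewrite ltnNge leq_addl /= addnK !expnD mulnA.
  rewrite -big_distrl /= addKn -e' addnC {1}(divn_eq n (g ^ t * g ^ t)) //.
- move=> f; case: ifP => hf.
  + move=> hd; have hft : f < t by case: (ltnP f t) => // /zd hz; rewrite hz in hd.
    by rewrite modn_small.
  + move=> /a'; have -> : f = f - (t + t) + (t + t) by lia.
    by rewrite modnDr addnK.
- by move=> f; case: ifP.
Qed.

Definition split_e (h c : nat) (b : bool) (i : nat) : nat :=
  c %/ h + ((if b then i < c %% h else h - c %% h <= i) : nat).

Lemma split_sum h c b : 0 < h -> \sum_(0 <= i < h) split_e h c b i = c.
Proof.
move=> h0; rewrite big_split /= sum_nat_const_nat subn0.
have hr : c %% h < h by rewrite ltn_pmod.
case: b.
  by rewrite sum_lt ?(ltnW hr) // mulnC -divn_eq.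
by rewrite sum_ge ?leq_subr // subKn ?(ltnW hr) // mulnC -divn_eq.
Qed.

Lemma split_bound h g c b i : 0 < h -> i < h -> c <= h * (g - 1) -> split_e h c b i <= g - 1.
Proof.
move=> h0 hi hc; rewrite /split_e.
have hr : c %% h < h by rewrite ltn_pmod.
have ed := divn_eq c h.
set q := c %/ h in ed *; set r := c %% h in hr ed *.
have hq : q <= g - 1.
  rewrite -(leq_pmul2r h0) [(g - 1) * h]mulnC; lia.
case E : (if b then i < r else h - r <= i) => /=; last by rewrite addn0.
have r0 : 0 < r by move: E; case: b; lia.
have : q < g - 1.
  rewrite -(ltn_pmul2r h0) [(g - 1) * h]mulnC; lia.
lia.
Qed.

Lemma split_zero h b i : i < h -> split_e h 0 b i = 0.
Proof. by move=> hi; rewrite /split_e div0n mod0n; case: b => //=; rewrite subn0 leqNgt hi. Qed.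

Lemma split_pos_last h c : 0 < h -> 0 < c -> 0 < split_e h c false h.-1.
Proof.
move=> h0 c0; rewrite /split_e /=.
have ed := divn_eq c h.
case: (posnP (c %% h)) => r0.
  by rewrite r0 addn0 in ed; rewrite ed in c0; lia.
have -> : h - c %% h <= h.-1 by lia.
by rewrite /= addn1.
Qed.

Lemma pos_witness (c : nat -> nat) g B : 0 < \sum_(0 <= f < B) c f * g ^ f ->
  exists2 f, f < B & 0 < c f.
Proof.
elim: B => [|B IH]; first by rewrite big_geq.
rewrite big_nat_recr //=.
case: (posnP (c B)) => [cB|cB]; last by move=> _; exists B.
rewrite cB mul0n addn0 => /IH [f hf hc]; exists f => //; lia.
Qed.

Definition col (h t x : nat) : nat :=
  if x is y.+1 then (if y %% (t + t) < t then 0 else (y %/ (t + t)) %% h) else 0.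

Theorem theorem2 (g h t : nat) :
  2 <= g -> 1 <= t -> g ^ t * (g - 1) < h ->
  exists W : nat -> nat -> Prop,
    (forall n, exists r, r < h /\ W r n) /\
    (forall n r1 r2, r1 < h -> r2 < h -> W r1 n -> W r2 n -> r1 = r2) /\
    (forall r, r < h -> inf_many_blocks t (W r)) /\
    (forall n, h <= n -> hfold_sum h (A_g g (W 0)) n).
Proof.
move=> g1 t0 hh.
have g0 : 0 < g by lia.
have X0 : 0 < g ^ t by rewrite expn_gt0 g0.
have hX : g ^ t + 1 <= h.
  have : g ^ t <= g ^ t * (g - 1) by rewrite leq_pmulr //; lia.
  lia.
have h0 : 0 < h by lia.
have T0 : 0 < t + t by lia.
exists (fun r x => col h t x = r).
split; last split; last split.
- move=> n; exists (col h t n); split => //.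
  rewrite /col; case: n => // n; case: ifP => // _; exact: ltn_pmod.
- by move=> n r1 r2 _ _ <- <-.
- move=> r hr N.
  case: (posnP r) => [->|r0].
    exists (N * (t + t)).+1; split.
      have HN : N <= N * (t + t) by rewrite leq_pmulr.
      lia.
    move=> i hi; rewrite addSn /col modnMDl modn_small ?hi //; lia.
  set k := N * h + r.
  exists (k * (t + t) + t).+1; split.
    have : N <= N * h by rewrite leq_pmulr.
    have : k <= k * (t + t) by rewrite leq_pmulr.
    rewrite /k; lia.
  move=> i hi; rewrite addSn -addnA /col modnMDl modn_small; last by lia.
  rewrite ltnNge leq_addr /= divnMDl // divn_small ?addn0; last by lia.
  by rewrite /k modnMDl modn_small.
- move=> n hn.
  have [c0 [q [e0 c0l c0u c0q]]] : exists c0 q, [/\ n = c0 + g * q, h.-1 <= c0,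
      c0 <= h * (g - 1) & (c0 < h -> 0 < q)].
    case: (leqP n (h * (g - 1))) => hn2.
      by exists n, 0; split => //; lia.
    set base := h.-1 * (g - 1).
    have hb1 : h.-1 <= base by rewrite /base leq_pmulr //; lia.
    have hb2 : base + (g - 1) = h * (g - 1).
      rewrite /base -{2}(prednK h0) mulSn; lia.
    have hm : (n - base) %% g < g by rewrite ltn_pmod.
    have hd := divn_eq (n - base) g.
    have hhg : h <= h * (g - 1) by rewrite leq_pmulr //; lia.
    exists (base + (n - base) %% g), ((n - base) %/ g); split.
    + rewrite mulnC; lia.
    + lia.
    + lia.
    + move=> hlt. rewrite divn_gt0 //. lia.
  have [c' [B' [e' [a' b']]]] := periodic_rep q g1 t0.
  pose c f := if f is f'.+1 then c' f' else c0.
  have hc : forall f, c f <= h * (g - 1).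
    move=> [|f] //=; apply: leq_trans (b' f) _; rewrite leq_mul2r; lia.
  have hcol : forall f, 0 < c f -> col h t f = 0.
    by move=> [|f] //= /a'; rewrite /col => ->.
  have en : n = \sum_(0 <= f < B'.+1) c f * g ^ f.
    rewrite big_nat_recl //= expn0 muln1 e0 e' big_distrr /=; congr (_ + _).
    by apply: eq_big_nat => f _; rewrite expnS mulnCA.
  pose e i f := split_e h (c f) (f == 0) i.
  pose x i := \sum_(0 <= f < B'.+1) e i f * g ^ f.
  have xpos : forall i, i < h -> exists2 f, f < B'.+1 & 0 < e i f.
    move=> i hi.
    case: (leqP h c0) => hc0.
      exists 0 => //; rewrite /e /split_e /=; have : 0 < c0 %/ h by rewrite divn_gt0.
      lia.
    have ec0 : c0 = h.-1 by lia.
    case: (ltnP i h.-1) => hi'.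
      exists 0 => //; rewrite /e /split_e /= modn_small; last by lia.
      by rewrite -ec0 in hi'; rewrite hi' addn1.
    have -> : i = h.-1 by lia.
    have := c0q hc0; rewrite e' => /pos_witness [f hf hcf].
    by exists f.+1 => //; apply: split_pos_last.
  exists [seq x i | i <- index_iota 0 h]; split.
  + by rewrite size_map size_iota subn0.
  + move=> b /mapP [i]; rewrite mem_index_iota => /andP [_ hi] ->.
    exists [seq f <- index_iota 0 B'.+1 | 0 < e i f], (e i); split.
    * rewrite -has_filter; apply/hasP.
      by have [f hf hef] := xpos i hi; exists f => //; rewrite mem_index_iota.
    * by apply: filter_uniq; rewrite /index_iota iota_uniq.
    * move=> f; rewrite mem_filter => /andP [hef _]; apply: hcol.
      case: (posnP (c f)) => // cz; move: hef; rewrite /e cz split_zero //.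
    * move=> f; rewrite mem_filter => /andP [hef _]; apply/andP; split => //.
      exact: split_bound.
    * rewrite big_filter big_mkcond /=; apply: eq_bigr => f _.
      by case: ifP => // /negbT; rewrite -leqNgt leqn0 => /eqP ->.
  + rewrite sumnE big_map /= en.
    rewrite (exchange_big_nat _ 0 h 0 B'.+1 xpredT xpredT (fun i f => e i f * g ^ f)) /=.
    apply: eq_big_nat => f _; rewrite -big_distrl /=; congr (_ * _).
    by rewrite split_sum.
Qed.
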